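(* Let $\omega\in\mathbb C\setminus\{0\}$ be fixed. There is exactly one pair of series $\mathsf W(x)\in\mathbb C[x][[t]]$ and $\mathsf H(x,y)\in\mathbb C[x,y][[t]]$ satisfying \[ \mathsf W(x)=x^2t\,\mathsf W(x)^2+\omega x t\,\mathsf H(x,0)+\omega^{-1}xt\,\mathsf H(0,x)+1 \] and \[ \mathsf H(x,y)=\mathsf W(x)\mathsf W(y)+\frac{\omega^{-1}}{y}\big(\mathsf H(x,y)-\mathsf H(x,0)\big)+\frac{\omega}{x}\big(\mathsf H(x,y)-\mathsf H(0,y)\big). \]
   Context: Here $\mathbb C[x][[t]]$ denotes formal power series in $t$ whose coefficients are polynomials in $x$ (similarly for $\mathbb C[x,y][[t]]$). The expressions $(\mathsf H(x,y)-\mathsf H(x,0))/y$ and $(\mathsf H(x,y)-\mathsf H(0,y))/x$ are again in $\mathbb C[x,y][[t]]$. *)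

(* Defs.v *)
From HB Require Import structures.
From mathcomp Require Import all_boot all_order all_algebra.
From mathcomp Require Import complex.
From mathcomp Require Import Rstruct.
Set Implicit Arguments. Unset Strict Implicit. Unset Printing Implicit Defensive.
Import Order.TTheory GRing.Theory Num.Theory.
Local Open Scope ring_scope.

Notation C := (complex Rdefinitions.R).

(* A formal power series in t with coefficients in A is represented by its
   coefficient sequence: f n = [t^n] f.
   C[x][[t]]   ~ nat -> {poly C}              (variable x)
   C[x,y][[t]] ~ nat -> {poly {poly C}}       (inner variable x, outer variable y) *)
Definition pseries (A : Type) := nat -> A.

Definition smul (A : pzRingType) (f g : pseries A) : pseries A :=
  fun n => \sum_(i < n.+1) f i * g (n - i)%N.

Definition tmul (A : pzRingType) (f : pseries A) : pseries A :=
  fun n => if n is m.+1 then f m else 0.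

Definition sone (A : pzRingType) : pseries A :=
  fun n => if n is 0 then 1 else 0.

Definition at_y0 (P : {poly {poly C}}) : {poly C} := P`_0.
Definition at_x0 (P : {poly {poly C}}) : {poly C} := map_poly (fun p => p.[0]) P.
Definition in_x (p : {poly C}) : {poly {poly C}} := p%:P.
Definition in_y (p : {poly C}) : {poly {poly C}} := map_poly polyC p.
Definition divy_diff (P : {poly {poly C}}) : {poly {poly C}} :=
  (P - in_x (at_y0 P)) %/ 'X.
Definition divx_diff (P : {poly {poly C}}) : {poly {poly C}} :=
  map_poly (fun p : {poly C} => p %/ 'X) (P - in_y (at_x0 P)).
Definition cst2 (c : C) : {poly {poly C}} := (c%:P)%:P.

Definition eqW (w : C) (W : pseries {poly C}) (H : pseries {poly {poly C}}) : Prop :=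
  forall n,
    W n = tmul (fun m => 'X^2 * smul W W m) n
          + tmul (fun m => w%:P * 'X * at_y0 (H m)) n
          + tmul (fun m => (w^-1)%:P * 'X * at_x0 (H m)) n
          + sone {poly C} n.

Definition eqH (w : C) (W : pseries {poly C}) (H : pseries {poly {poly C}}) : Prop :=
  forall n,
    H n = smul (fun i => in_x (W i)) (fun j => in_y (W j)) n
          + cst2 (w^-1) * divy_diff (H n)
          + cst2 w * divx_diff (H n).

(* Main.v *)
Require Import Defs.
From mathcomp Require Import all_boot all_order all_algebra.
From mathcomp Require Import complex Rstruct.
From Stdlib Require Import FunctionalExtensionality.
From mathcomp Require Import ring.
Set Implicit Arguments. Unset Strict Implicit. Unset Printing Implicit Defensive.
Import Order.TTheory GRing.Theory Num.Theory.
Local Open Scope ring_scope.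

Lemma coef_divX (R : idomainType) (p : {poly R}) i : (p %/ 'X)`_i = p`_i.+1.
Proof. by rewrite -(expr1 'X) -Pdiv.IdomainMonic.drop_poly_divp coef_drop_poly addn1. Qed.

Definition c2 (P : {poly {poly C}}) i j := (P`_j)`_i.

Lemma c2_eq P Q : (forall i j, c2 P i j = c2 Q i j) -> P = Q.
Proof. move=> h; apply/polyP=> j; apply/polyP=> i; exact: h. Qed.

Lemma c2D P Q i j : c2 (P + Q) i j = c2 P i j + c2 Q i j.
Proof. by rewrite /c2 !coefD. Qed.

Lemma c2B P Q i j : c2 (P - Q) i j = c2 P i j - c2 Q i j.
Proof. by rewrite /c2 !coefB. Qed.

Lemma c2_cst P c i j : c2 (cst2 c * P) i j = c * c2 P i j.
Proof. by rewrite /c2 /cst2 !coefCM. Qed.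

Lemma c2_divy P i j : c2 (divy_diff P) i j = c2 P i j.+1.
Proof.
by rewrite /c2 /divy_diff coef_divX coefB /in_x coefC /= subr0.
Qed.

Lemma c2_divx P i j : c2 (divx_diff P) i j = c2 P i.+1 j.
Proof.
rewrite /c2 /divx_diff coef_map_id0; last by rewrite div0p.
rewrite coef_divX coefB /in_y /at_x0 coef_map_id0 // coef_map_id0 ?horner0 //.
by rewrite coefB coefC /= subr0.
Qed.

Section T.
Variable w : C.
Definition T (P : {poly {poly C}}) := cst2 (w^-1) * divy_diff P + cst2 w * divx_diff P.

Lemma c2T P i j : c2 (T P) i j = w^-1 * c2 P i j.+1 + w * c2 P i.+1 j.
Proof. by rewrite /T c2D !c2_cst c2_divy c2_divx. Qed.

Lemma TB P Q : T P - T Q = T (P - Q).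
Proof. apply: c2_eq=> i j; by rewrite c2B !c2T !c2B !mulrBr opprD addrACA. Qed.

Lemma T0 : T 0 = 0.
Proof. by move: (TB 0 0); rewrite !subrr => /esym. Qed.

Definition inV k P := forall i j, (k <= i + j)%N -> c2 P i j = 0.

Lemma inV0 P : inV 0 P -> P = 0.
Proof. move=> h; apply: c2_eq=> i j; rewrite h // /c2 !coef0 //. Qed.

Lemma inVT k P : inV k P -> inV k.-1 (T P).
Proof.
move=> h i j hk; rewrite c2T !h ?mulr0 ?addr0 //.
all: by case: k {h} hk => [|k] /=; rewrite ?addnS ?addSn // => /ltnW.
Qed.

Definition bnd (P : {poly {poly C}}) := (size P + \max_(j < size P) size (P`_j)%R)%N.

Lemma inV_bnd P : inV (bnd P) P.
Proof.
move=> i j; rewrite /bnd /c2 => hk.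
case: (ltnP j (size P)) => hj; last by rewrite (nth_default _ hj) coef0.
apply: nth_default.
have hm := @leq_bigmax _ (fun j0 : 'I_(size P) => size (P`_j0)%R) (Ordinal hj); rewrite /= in hm.
apply: leq_trans hm _. rewrite -(leq_add2r j). apply: leq_trans _ hk.
by rewrite addnC leq_add2r ltnW.
Qed.

Definition Sol S := iter (bnd S) (fun h => S + T h) 0.

Lemma Sol_spec S : Sol S = S + T (Sol S).
Proof.
pose F h := S + T h.
have hd : forall m, inV (bnd S - m) (iter m.+1 F 0 - iter m F 0).
  elim=> [|m IH]; first by rewrite subn0 /= /F T0 addr0 subr0; exact: inV_bnd.
  have -> : iter m.+2 F 0 - iter m.+1 F 0 = T (iter m.+1 F 0 - iter m F 0).
    by rewrite -TB /= /F opprD addrACA subrr add0r.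
  by rewrite subnS; apply: inVT.
have := hd (bnd S); rewrite subnn => /inV0 /eqP; rewrite subr_eq0 => /eqP.
by rewrite /Sol -/F => e; rewrite -{1}e.
Qed.

Lemma Sol_uniq S H : H = S + T H -> H = Sol S.
Proof.
move=> hH; have hS := Sol_spec S.
set D := H - Sol S.
have hD : D = T D by rewrite /D -TB {1}hH {1}hS opprD addrACA subrr add0r.
suff: D = 0 by move/eqP; rewrite subr_eq0 => /eqP.
have := @inV_bnd D; move: (bnd D) => k; elim: k => [|k IH] hk; first exact: inV0.
by apply: IH; rewrite hD; apply: (inVT hk).
Qed.
End T.

Section Rec.
Variable A : Type.
Variable a0 : A.
Variable step : nat -> (nat -> A) -> A.
Hypothesis Hdep : forall n f g, (forall m, (m < n)%N -> f m = g m) -> step n f = step n g.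

Fixpoint ap k : nat -> A := match k with 0 => fun _ => a0 | k.+1 => fun n => step n (ap k) end.

Lemma ap_S k n : (n < k)%N -> ap k n = ap k.+1 n.
Proof.
elim: k n => [//|k IH] n hn /=; apply: Hdep => m hm; apply: IH.
exact: leq_trans hm hn.
Qed.

Lemma ap_le k k' n : (n < k)%N -> (k <= k')%N -> ap k n = ap k' n.
Proof.
move=> hn; elim: k' => [|k' IH]; first by rewrite leqn0 => /eqP e; move: hn; rewrite e.
rewrite leq_eqVlt => /orP [/eqP -> //|hk]; rewrite IH // ap_S //.
exact: leq_trans hn hk.
Qed.

Definition gfix n := ap n.+1 n.

Lemma gfix_spec n : gfix n = step n gfix.
Proof. rewrite /gfix /=; apply: Hdep => m hm; exact: esym (ap_le (ltnSn m) hm). Qed.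

Lemma fix_uniq g : (forall n, g n = step n g) -> forall n, g n = gfix n.
Proof.
move=> hg n; elim: n {-2}n (leqnn n) => [|n IH] k hk.
  by rewrite hg gfix_spec; apply: Hdep => m; move: hk; rewrite leqn0 => /eqP ->.
rewrite hg gfix_spec; apply: Hdep => m hm; apply: IH; exact: leq_trans hm hk.
Qed.
End Rec.

Section Main.
Variable w : C.
Definition AT := ({poly C} * {poly {poly C}})%type.

Definition stepW n (f : nat -> AT) : {poly C} :=
  tmul (fun m => 'X^2 * smul (fun i => (f i).1) (fun i => (f i).1) m) n
  + tmul (fun m => w%:P * 'X * at_y0 ((f m).2)) n
  + tmul (fun m => (w^-1)%:P * 'X * at_x0 ((f m).2)) n
  + sone {poly C} n.

Definition upd n (f : nat -> AT) (Wn : {poly C}) i := if i == n then Wn else (f i).1.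

Definition step n (f : nat -> AT) : AT :=
  (stepW n f, Sol w (smul (fun i => in_x (upd n f (stepW n f) i))
                          (fun j => in_y (upd n f (stepW n f) j)) n)).

Lemma stepW_dep n f g : (forall m, (m < n)%N -> f m = g m) -> stepW n f = stepW n g.
Proof.
case: n => [//|n] h; rewrite /stepW /tmul /smul h //.
congr (_ * _ + _ + _ + _); apply: eq_bigr => i _; rewrite !h //.
by rewrite ltnS leq_subr.
Qed.

Lemma step_dep n f g : (forall m, (m < n)%N -> f m = g m) -> step n f = step n g.
Proof.
move=> h; rewrite /step (stepW_dep h); congr (_, Sol w _).
rewrite /smul; apply: eq_bigr => i _; rewrite /upd.
have hi : (i <= n)%N by rewrite -ltnS.
have hni : (n - i <= n)%N by rewrite leq_subr.
have e1 : forall k, (k <= n)%N -> (if k == n then stepW n g else (f k).1) = (if k == n then stepW n g else (g k).1).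
  by move=> k hk; case: eqP => // /eqP ne; rewrite h // ltn_neqAle ne hk.
by rewrite e1 // e1.
Qed.
End Main.

Lemma charac (w : C) (W : pseries {poly C}) (H : pseries {poly {poly C}}) :
  (eqW w W H /\ eqH w W H) <-> forall n, (W n, H n) = step w n (fun m => (W m, H m)).
Proof.
split.
  move=> [hW hH] n.
  have eW : stepW w n (fun m => (W m, H m)) = W n by rewrite hW.
  rewrite /step; have -> : upd n (fun m => (W m, H m)) (stepW w n (fun m => (W m, H m))) = W.
    by apply: functional_extensionality => i; rewrite /upd eW; case: eqP => // ->.
  rewrite eW; congr (_, _); apply: Sol_uniq; by rewrite /T addrA; exact (hH n).
move=> h; have hW : eqW w W H by move=> n; case: (h n) => ->.
split=> // n.
have eW : stepW w n (fun m => (W m, H m)) = W n by rewrite hW.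
have hu : upd n (fun m => (W m, H m)) (stepW w n (fun m => (W m, H m))) = W.
  by apply: functional_extensionality => i; rewrite /upd eW; case: eqP => // ->.
case: (h n) => _; rewrite hu => ->; rewrite -addrA; exact: Sol_spec.
Qed.

Unset Implicit Arguments.
Theorem mainTheorem3 (w : C) (hw : w != 0) :
  exists! WH : pseries {poly C} * pseries {poly {poly C}},
    eqW w WH.1 WH.2 /\ eqH w WH.1 WH.2.
Proof.
pose g := gfix (0, 0) (step w).
have hg : forall n, g n = step w n g := @gfix_spec _ (0, 0) (step w) (@step_dep w).
clearbody g.
exists ((fun n => (g n).1), (fun n => (g n).2)); split.
  apply/charac => n; transitivity (g n); first by rewrite /= -surjective_pairing.
  rewrite {1}hg; apply: step_dep => m _; exact: surjective_pairing.
move=> [W H] /charac h.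
have hu : forall n, (W n, H n) = g n := fun n =>
  etrans (@fix_uniq _ (0, 0) (step w) (@step_dep w) _ h n)
         (esym (@fix_uniq _ (0, 0) (step w) (@step_dep w) _ hg n)).
congr (_, _); apply: functional_extensionality => n; by rewrite -hu.
Qed.
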